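(* Suppose there is a horizontal lift along $\phi_0:\mathcal{A}\to\mathcal{B}$ and $H^2_{\mathrm{CE,der}}(\mathcal{A},\mathcal{B})=\{0\}$. Then for any formal Poisson deformations $\pi$ of $\pi_0$ and $\sigma$ of $\sigma_0$ there exists a derivation $X\in\lambda\mathrm{Der}(\mathcal{B})[[\lambda]]$ such that $\Phi=\exp(X)\phi_0:(\mathcal{A}[[\lambda]],\pi)\to(\mathcal{B}[[\lambda]],\sigma)$ is a Poisson morphism.
   Context: $\mathbb{K}$ is a field of characteristic zero (e.g. $\mathbb{R}$ or $\mathbb{C}$). $\mathcal{A},\mathcal{B}$ are commutative $\mathbb{K}$-algebras with Poisson brackets $\pi_0=\{\cdot,\cdot\}_{\mathcal{A}}$, $\sigma_0=\{\cdot,\cdot\}_{\mathcal{B}}$, and $\phi_0:\mathcal{A}\to\mathcal{B}$ is a Poisson morphism (algebra morphism preserving brackets). A formal Poisson deformation of $\pi_0$ is a $\mathbb{K}[[\lambda]]$-bilinear Poisson bracket $\pi=\sum_j\lambda^j\pi_j$ on $\mathcal{A}[[\lambda]]$ (with its $\lambda$-linearly extended commutative product) whose zeroth-order term is $\pi_0$. $\mathrm{Der}(\mathcal{B})$ is the space of derivations of $\mathcal{B}$; for $X\in\lambda\mathrm{Der}(\mathcal{B})[[\lambda]]$, $\exp(X)=\sum_n X^n/n!$ is an algebra automorphism of $\mathcal{B}[[\lambda]]$; maps are extended $\lambda$-linearly. Chevalley–Eilenberg complex: $C^0_{\mathrm{CE}}(\mathcal{A},\mathcal{B})=\mathcal{B}$,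 $C^k_{\mathrm{CE}}(\mathcal{A},\mathcal{B})$ = $k$-linear antisymmetric maps $\mathcal{A}^k\to\mathcal{B}$, with $(\delta D)(a_0,\dots,a_k)=\sum_j(-1)^j\{\phi_0(a_j),D(a_0,\dots,\widehat{a_j},\dots,a_k)\}_{\mathcal{B}}+\sum_{i<j}(-1)^{i+j}D(\{a_i,a_j\}_{\mathcal{A}},a_0,\dots,\widehat{a_i},\dots,\widehat{a_j},\dots,a_k)$ (for undeformed brackets). $C^k_{\mathrm{CE,der}}(\mathcal{A},\mathcal{B})$ is the subcomplex of cochains that are derivations along $\phi_0$ in each argument: $D(\dots,aa',\dots)=\phi_0(a)D(\dots,a',\dots)+D(\dots,a,\dots)\phi_0(a')$ (with $C^0_{\mathrm{CE,der}}=\mathcal{B}$); its cohomology is $H^\bullet_{\mathrm{CE,der}}(\mathcal{A},\mathcal{B})$. A horizontal lift along $\phi_0$ is a map $C^1_{\mathrm{CE,der}}(\mathcal{A},\mathcal{B})\to\mathrm{Der}(\mathcal{B})$, $D\mapsto D^h$, with $(aD)^h=\phi_0(a)D^h$ for $a\in\mathcal{A}$ (where $(aD)(a_1)=\phi_0(a)D(a_1)$) and $D^h\circ\phi_0=D$. *)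

(* Defs.v *)
From HB Require Import structures.
From mathcomp Require Import all_boot all_order all_algebra.
Set Implicit Arguments. Unset Strict Implicit. Unset Printing Implicit Defensive.
Import Order.TTheory GRing.Theory Num.Theory.
Local Open Scope ring_scope.

Section Defs.
Variable K : fieldType.

Definition is_klinear (U V : lmodType K) (f : U -> V) : Prop :=
  forall (k : K) (x y : U), f (k *: x + y) = k *: f x + f y.

Definition is_kbilinear (U V W : lmodType K) (f : U -> V -> W) : Prop :=
  (forall y, is_klinear (fun x => f x y)) /\ (forall x, is_klinear (f x)).

Definition is_poisson_bracket (A : comAlgType K) (br : A -> A -> A) : Prop :=
  [/\ is_kbilinear br,
      (forall a b, br a b = - br b a),
      (forall a b c, br a (b * c) = br a b * c + b * br a c) &
      (forall a b c, br a (br b c) + br b (br c a) + br c (br a b) = 0)].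

Definition is_alg_morphism (A B : comAlgType K) (phi : A -> B) : Prop :=
  [/\ is_klinear phi, (forall a b, phi (a * b) = phi a * phi b) & phi 1 = 1].

Definition is_poisson_morphism (A B : comAlgType K)
  (brA : A -> A -> A) (brB : B -> B -> B) (phi : A -> B) : Prop :=
  is_alg_morphism phi /\ forall a b, phi (brA a b) = brB (phi a) (phi b).

Definition is_derivation (B : comAlgType K) (X : B -> B) : Prop :=
  is_klinear X /\ forall x y, X (x * y) = x * X y + X x * y.

Definition is_der_along (A B : comAlgType K) (phi0 : A -> B) (D : A -> B) : Prop :=
  is_klinear D /\ forall a a', D (a * a') = phi0 a * D a' + D a * phi0 a'.

Section CE.
Variables (A B : comAlgType K) (brA : A -> A -> A) (brB : B -> B -> B)
          (phi0 : A -> B).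

Definition C1der (D : A -> B) : Prop := is_der_along phi0 D.

Definition C2der (D : A -> A -> B) : Prop :=
  [/\ is_kbilinear D, (forall a b, D a b = - D b a),
      (forall b, is_der_along phi0 (fun a => D a b)) &
      (forall a, is_der_along phi0 (D a))].

Definition delta1 (D : A -> B) : A -> A -> B :=
  fun a0 a1 => brB (phi0 a0) (D a1) - brB (phi0 a1) (D a0) - D (brA a0 a1).

Definition delta2 (D : A -> A -> B) : A -> A -> A -> B :=
  fun a0 a1 a2 =>
    brB (phi0 a0) (D a1 a2) - brB (phi0 a1) (D a0 a2) + brB (phi0 a2) (D a0 a1)
    - D (brA a0 a1) a2 + D (brA a0 a2) a1 - D (brA a1 a2) a0.

Definition H2der_trivial : Prop :=
  forall D : A -> A -> B, C2der D -> (forall a0 a1 a2, delta2 D a0 a1 a2 = 0) ->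
    exists E : A -> B, C1der E /\ forall a0 a1, D a0 a1 = delta1 E a0 a1.

Definition has_horizontal_lift : Prop :=
  exists h : (A -> B) -> (B -> B),
    forall D, C1der D ->
      [/\ is_derivation (h D),
          (forall a y, h (fun x => phi0 a * D x) y = phi0 a * h D y) &
          (forall a, h D (phi0 a) = D a)].
End CE.

Definition fps (T : Type) := nat -> T.

Section FPS.
Variable A : comAlgType K.

Definition fps_add (f g : fps A) : fps A := fun n => f n + g n.
Definition fps_scale (k : K) (f : fps A) : fps A := fun n => k *: f n.
Definition fps_mul (f g : fps A) : fps A :=
  fun n => \sum_(i < n.+1) f i * g (n - i)%N.
Definition fps_one : fps A := fun n => if n == 0%N then 1 else 0.

(* bracket pi = sum_j lambda^j pi_j, extended K[[lambda]]-bilinearly *)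
Definition fps_br (pi : nat -> A -> A -> A) (f g : fps A) : fps A :=
  fun n => \sum_(i < n.+1) \sum_(j < (n - i).+1) pi i (f j) (g (n - i - j)%N).

Definition is_formal_poisson_deformation (pi0 : A -> A -> A)
    (pi : nat -> A -> A -> A) : Prop :=
  [/\ pi 0%N = pi0,
      (forall j, is_kbilinear (pi j)),
      (forall f g, fps_br pi f g =1 (fun n => - fps_br pi g f n)),
      (forall f g h, fps_br pi f (fps_mul g h) =1
                     fps_add (fps_mul (fps_br pi f g) h) (fps_mul g (fps_br pi f h))) &
      (forall f g h, fps_add (fps_add (fps_br pi f (fps_br pi g h))
                                      (fps_br pi g (fps_br pi h f)))
                             (fps_br pi h (fps_br pi f g)) =1 (fun _ => 0))].

(* X = sum_j lambda^j X_j acting on A[[lambda]] *)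
Definition fps_der_act (X : nat -> A -> A) (f : fps A) : fps A :=
  fun n => \sum_(i < n.+1) X i (f (n - i)%N).

(* exp(X) = sum_m X^m / m!  (for X in lambda Der[[lambda]], only m <= n
   contributes to the coefficient of lambda^n) *)
Definition fps_exp (X : nat -> A -> A) (f : fps A) : fps A :=
  fun n => \sum_(m < n.+1) (m`!%:R)^-1 *: iter m (fps_der_act X) f n.

(* X in lambda Der(A)[[lambda]] *)
Definition is_lambda_der_series (X : nat -> A -> A) : Prop :=
  X 0%N =1 (fun _ => 0) /\ forall j, is_derivation (X j).
End FPS.

Definition fps_map (A B : Type) (phi : A -> B) (f : fps A) : fps B :=
  fun n => phi (f n).

Definition is_fps_poisson_morphism (A B : comAlgType K)
    (pi : nat -> A -> A -> A) (sigma : nat -> B -> B -> B)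
    (Phi : fps A -> fps B) : Prop :=
  [/\ (forall k f g, Phi (fps_add (fps_scale k f) g) =1
                     fps_add (fps_scale k (Phi f)) (Phi g)),
      (forall f g, Phi (fps_mul f g) =1 fps_mul (Phi f) (Phi g)),
      Phi (fps_one A) =1 fps_one B &
      (forall f g, Phi (fps_br pi f g) =1 fps_br sigma (Phi f) (Phi g))].

End Defs.

(* Main.v *)
Require Import Defs.
From HB Require Import structures.
From mathcomp Require Import all_boot all_order all_algebra.
From mathcomp Require Import zify ring.
From Stdlib Require Import FunctionalExtensionality Classical ClassicalEpsilon.
Import GRing.Theory.
Local Open Scope ring_scope.

Module Aux.
Set Implicit Arguments. Unset Strict Implicit. Unset Printing Implicit Defensive.

Section Sums.
Variable V : nmodType.

Lemma sum_tri (H : nat -> nat -> V) n :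
  \sum_(i < n.+1) \sum_(j < (n - i).+1) H i j =
  \sum_(i < n.+1) \sum_(j < n.+1) (if (i + j <= n)%N then H i j else 0).
Proof.
apply: eq_bigr => i _.
rewrite (big_ord_widen n.+1 (fun j => H i j)); last by rewrite ltnS leq_subr.
rewrite big_mkcond; apply: eq_bigr => j _ /=.
have Hi := ltn_ord i.
have -> : (j < (n - i).+1)%N = (i + j <= n)%N by apply/idP/idP; lia.
by [].
Qed.

Lemma tri_swap (H : nat -> nat -> V) n :
  \sum_(i < n.+1) \sum_(j < (n - i).+1) H i j =
  \sum_(j < n.+1) \sum_(i < (n - j).+1) H i j.
Proof.
rewrite sum_tri (sum_tri (fun j i => H i j)) exchange_big /=.
apply: eq_bigr => i _; apply: eq_bigr => j _; by rewrite addnC.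
Qed.

Lemma tri_diag (H : nat -> nat -> V) n :
  \sum_(m < n.+1) \sum_(k < m.+1) H k (m - k)%N =
  \sum_(k < n.+1) \sum_(l < (n - k).+1) H k l.
Proof.
elim: n => [|n IH].
  by rewrite !big_ord1.
rewrite big_ord_recr /= IH.
rewrite [RHS](eq_bigr (fun k : 'I_n.+2 =>
   \sum_(l < (n.+1 - k)) H k l + H k (n.+1 - k)%N)); last first.
  move=> k _; have Hk := ltn_ord k.
  by rewrite big_ord_recr.
rewrite big_split /=; congr (_ + _).
rewrite [RHS]big_ord_recr /= subnn big_ord0 addr0.
apply: eq_bigr => k _; have Hk := ltn_ord k.
by rewrite subSn.
Qed.

End Sums.

Definition cst (T : nmodType) (a : T) : fps T := fun n => if n == 0%N then a else 0.
Definition sh (T : nmodType) (f : fps T) : fps T := fun n => if n is n'.+1 then f n' else 0.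
Definition tl (T : Type) (f : fps T) : fps T := fun n => f n.+1.

Section Lin.
Variable K : fieldType.
Variables (U V : lmodType K) (f : U -> V) (Hf : is_klinear f).

Lemma lin0 : f 0 = 0.
Proof.
have := Hf 1 0 0; rewrite scale1r addr0 => /(congr1 (fun x => x - f 0)).
by rewrite subrr addrK scale1r.
Qed.

Lemma linD x y : f (x + y) = f x + f y.
Proof. by have := Hf 1 x y; rewrite !scale1r. Qed.

Lemma linZ k x : f (k *: x) = k *: f x.
Proof. by have := Hf k x 0; rewrite !addr0 lin0 addr0. Qed.

Lemma linN x : f (- x) = - f x.
Proof. by rewrite -scaleN1r linZ scaleN1r. Qed.

Lemma linB x y : f (x - y) = f x - f y.
Proof. by rewrite linD linN. Qed.

Lemma lin_sum (I : Type) (r : seq I) (P : pred I) (F : I -> U) :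
  f (\sum_(i <- r | P i) F i) = \sum_(i <- r | P i) f (F i).
Proof. exact: (big_morph f linD lin0). Qed.

End Lin.

Section Br.
Variable K : fieldType.
Variable T : comAlgType K.

Lemma flip_bil (pi : nat -> T -> T -> T) :
  (forall j, is_kbilinear (pi j)) ->
  forall j, is_kbilinear (fun x y => pi j y x).
Proof. by move=> H j; split; case: (H j). Qed.

Lemma br_flip (pi : nat -> T -> T -> T) f g :
  fps_br pi f g = fps_br (fun i x y => pi i y x) g f.
Proof.
apply: functional_extensionality => n; rewrite /fps_br.
apply: eq_bigr => i _; rewrite (reindex_inj rev_ord_inj) /=.
apply: eq_bigr => j _; have Hj := ltn_ord j; have Hi := ltn_ord i.
congr (pi _ (f _) (g _)); lia.
Qed.

Lemma mul_flip (f g : fps T) : fps_mul f g = fps_mul g f.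
Proof.
apply: functional_extensionality => n; rewrite /fps_mul (reindex_inj rev_ord_inj) /=.
apply: eq_bigr => j _; have Hj := ltn_ord j.
rewrite mulrC; congr (_ * _); congr (_ _); lia.
Qed.

Variables (pi : nat -> T -> T -> T) (Hpi : forall j, is_kbilinear (pi j)).

Lemma pil0 j y : pi j 0 y = 0.
Proof. exact: (lin0 (proj1 (Hpi j) y)). Qed.
Lemma pir0 j x : pi j x 0 = 0.
Proof. exact: (lin0 (proj2 (Hpi j) x)). Qed.

Lemma br_linl k f1 f2 g :
  fps_br pi (fps_add (fps_scale k f1) f2) g =
  fps_add (fps_scale k (fps_br pi f1 g)) (fps_br pi f2 g).
Proof.
apply: functional_extensionality => n; rewrite /fps_br/fps_add/fps_scale.
rewrite scaler_sumr -big_split; apply: eq_bigr => i _.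
rewrite scaler_sumr -big_split; apply: eq_bigr => j _.
exact: (proj1 (Hpi i)).
Qed.

Lemma br_linr k f g1 g2 :
  fps_br pi f (fps_add (fps_scale k g1) g2) =
  fps_add (fps_scale k (fps_br pi f g1)) (fps_br pi f g2).
Proof.
apply: functional_extensionality => n; rewrite /fps_br/fps_add/fps_scale.
rewrite scaler_sumr -big_split; apply: eq_bigr => i _.
rewrite scaler_sumr -big_split; apply: eq_bigr => j _.
exact: (proj2 (Hpi i)).
Qed.

Lemma br_0 f g : fps_br pi f g 0%N = pi 0%N (f 0%N) (g 0%N).
Proof. by rewrite /fps_br !big_ord1. Qed.

Lemma br_local m f f' g g' :
  (forall j, (j <= m)%N -> f j = f' j) -> (forall j, (j <= m)%N -> g j = g' j) ->
  fps_br pi f g m = fps_br pi f' g' m.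
Proof.
move=> Hf Hg; rewrite /fps_br; apply: eq_bigr => i _; apply: eq_bigr => j _.
have Hi := ltn_ord i; have Hj := ltn_ord j.
by rewrite Hf ?Hg //; lia.
Qed.

Lemma br_shl f g : fps_br pi (sh f) g = sh (fps_br pi f g).
Proof.
apply: functional_extensionality => -[|n]; first by rewrite br_0 /= pil0.
rewrite /= /fps_br big_ord_recr /= subnn big_ord1 /= pil0 addr0.
apply: eq_bigr => i _; have Hi := ltn_ord i.
rewrite subSn; last by lia.
rewrite big_ord_recl /= pil0 add0r; apply: eq_bigr => j _.
rewrite /bump /=; congr (pi _ _ (g _)); lia.
Qed.

Lemma br_cst a b : fps_br pi (cst a) (cst b) = fun n => pi n a b.
Proof.
apply: functional_extensionality => n; rewrite /fps_br.
rewrite big_ord_recr /= subnn big_ord1 /cst /=.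
rewrite big1 ?add0r // => i _; have Hi := ltn_ord i.
rewrite big_ord_recl /= subn0 big1 ?addr0.
  have -> : (n - i == 0)%N = false by apply/negbTE; lia.
  by rewrite pir0.
by move=> j _; rewrite pil0.
Qed.

Lemma br_high_r n f g : (forall j, (j <= n)%N -> g j = 0) ->
  fps_br pi f g n.+1 = pi 0%N (f 0%N) (g n.+1).
Proof.
move=> Hg; rewrite /fps_br big_ord_recl /= subn0 big_ord_recl /= subn0.
rewrite big1 ?addr0; last first.
  by move=> j _; rewrite /bump /= Hg ?pir0 //; lia.
rewrite big1 ?addr0 // => i _; apply: big1 => j _.
have Hi := ltn_ord i; have Hj := ltn_ord j.
by rewrite Hg ?pir0 //; rewrite /bump /=; lia.
Qed.

End Br.

Section Br2.
Variable K : fieldType.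
Variable T : comAlgType K.
Variables (pi : nat -> T -> T -> T) (Hpi : forall j, is_kbilinear (pi j)).

Lemma br_shr f g : fps_br pi f (sh g) = sh (fps_br pi f g).
Proof.
by rewrite br_flip br_shl ?[fps_br pi f g]br_flip //; apply: flip_bil.
Qed.

Lemma br_high_l n f g : (forall j, (j <= n)%N -> f j = 0) ->
  fps_br pi f g n.+1 = pi 0%N (f n.+1) (g 0%N).
Proof.
by move=> Hf; rewrite br_flip (br_high_r (flip_bil Hpi)).
Qed.

Lemma mul_high_r n (f g : fps T) : (forall j, (j <= n)%N -> g j = 0) ->
  fps_mul f g n.+1 = f 0%N * g n.+1.
Proof.
move=> Hg; rewrite /fps_mul big_ord_recl /= subn0 big1 ?addr0 // => i _.
have Hi := ltn_ord i; by rewrite Hg ?mulr0 // /bump /=; lia.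
Qed.

Lemma mul_high_l n (f g : fps T) : (forall j, (j <= n)%N -> f j = 0) ->
  fps_mul f g n.+1 = f n.+1 * g 0%N.
Proof. by move=> Hf; rewrite mul_flip (mul_high_r _ Hf) mulrC. Qed.

Lemma mul_cst (a b : T) : fps_mul (cst a) (cst b) = cst (a * b).
Proof.
apply: functional_extensionality => n; rewrite /fps_mul big_ord_recl /= subn0.
rewrite big1 ?addr0; last by move=> i _; rewrite /cst /= mul0r.
by rewrite /cst; case: n => [|n] /=; rewrite ?mulr0.
Qed.

End Br2.

Lemma sum_ext (V : nmodType) (F : nat -> V) p q : (p <= q)%N ->
  (forall j, (p <= j)%N -> (j < q)%N -> F j = 0) ->
  \sum_(j < p) F j = \sum_(j < q) F j.
Proof.
move=> Hpq HF; rewrite (big_ord_widen q F Hpq) big_mkcond.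
apply: eq_bigr => j _; case: ifP => // /negbT; rewrite -leqNgt => Hj.
by rewrite HF.
Qed.

Section Der.
Variable K : fieldType.
Variable T : comAlgType K.
Variable X : nat -> T -> T.
Hypothesis HX0 : X 0%N =1 (fun _ => 0).
Hypothesis HXl : forall j, is_klinear (X j).
Local Notation D := (fps_der_act X).

Lemma D_lin k f g : D (fps_add (fps_scale k f) g) = fps_add (fps_scale k (D f)) (D g).
Proof.
apply: functional_extensionality => n; rewrite /fps_der_act/fps_add/fps_scale.
by rewrite scaler_sumr -big_split; apply: eq_bigr => i _; apply: HXl.
Qed.

Lemma D_0 f : D f 0%N = 0.
Proof. by rewrite /fps_der_act big_ord1 HX0. Qed.

Lemma D_sh f : D (sh f) = sh (D f).
Proof.
apply: functional_extensionality => -[|n]; first by rewrite D_0.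
rewrite /= /fps_der_act big_ord_recr /= subnn /= (lin0 (HXl _)) addr0.
apply: eq_bigr => i _; have Hi := ltn_ord i.
by rewrite subSn.
Qed.

Lemma iterD_sh m f : iter m D (sh f) = sh (iter m D f).
Proof. by elim: m => [|m IH] //=; rewrite IH D_sh. Qed.

Lemma iterD_lin m k f g : iter m D (fps_add (fps_scale k f) g) =
   fps_add (fps_scale k (iter m D f)) (iter m D g).
Proof. by elim: m => [|m IH] //=; rewrite IH D_lin. Qed.

Lemma iterD_0 m f : iter m.+1 D f 0%N = 0.
Proof. by rewrite iterS D_0. Qed.

Lemma iterD_van m f k : (k < m)%N -> iter m D f k = 0.
Proof.
elim: m k => [|m IH] k // Hk; rewrite iterS /fps_der_act.
apply: big1 => i _; case: (posnP i) => [->|Hi]; first by rewrite HX0.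
by rewrite IH ?(lin0 (HXl _)) //; have := ltn_ord i; lia.
Qed.

Lemma D_sum (I : finType) (F : I -> fps T) :
  D (fun n => \sum_(k : I) F k n) = fun n => \sum_(k : I) D (F k) n.
Proof.
apply: functional_extensionality => n; rewrite /fps_der_act.
under eq_bigr do rewrite (lin_sum (HXl _)).
by rewrite exchange_big.
Qed.

Lemma D_zero : D (fun _ => 0) = fun _ => 0.
Proof.
apply: functional_extensionality => n; rewrite /fps_der_act.
by apply: big1 => i _; rewrite (lin0 (HXl _)).
Qed.

Hypothesis HXd : forall j, is_derivation (X j).

Lemma D_leib f g : D (fps_mul f g) = fps_add (fps_mul (D f) g) (fps_mul f (D g)).
Proof.
apply: functional_extensionality => n; rewrite /fps_der_act/fps_add/fps_mul.
under eq_bigr do rewrite (lin_sum (HXl _)).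
under eq_bigr do under eq_bigr do rewrite (proj2 (HXd _)).
under eq_bigr do rewrite big_split /=.
rewrite big_split /= addrC; congr (_ + _).
  have := tri_diag (fun i j => X i (f j) * g (n - i - j)%N) n => /= <-.
  apply: eq_bigr => m _; rewrite mulr_suml; apply: eq_bigr => k _.
  have Hm := ltn_ord m; have Hk := ltn_ord k.
  by congr (_ * g _); lia.
rewrite (tri_swap (fun i j => f j * X i (g (n - i - j)%N))).
apply: eq_bigr => j _; rewrite mulr_sumr; apply: eq_bigr => i _.
by rewrite subnAC.
Qed.

Lemma D_one : D (fps_one T) = fun _ => 0.
Proof.
apply: functional_extensionality => n; rewrite /fps_der_act.
apply: big1 => i _; rewrite /fps_one; case: ifP => _.
  have := proj2 (HXd i) 1 1; rewrite !mulr1 mul1r => /(congr1 (fun x => x - X i 1)).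
  by rewrite subrr addrK => ->.
exact: (lin0 (HXl _)).
Qed.

End Der.

Section Exp.
Variable K : fieldType.
Hypothesis HK : [pchar K] =i pred0.
Variable T : comAlgType K.
Variable X : nat -> T -> T.
Hypothesis HX0 : X 0%N =1 (fun _ => 0).
Hypothesis HXd : forall j, is_derivation (X j).
Let HXl : forall j, is_klinear (X j). Proof. by move=> j; case: (HXd j). Qed.
Local Notation D := (fps_der_act X).

Lemma natS_neq0 n : (n.+1%:R : K) != 0.
Proof. by move/pcharf0P: HK => ->. Qed.

Lemma fact_neq0 n : (n`!%:R : K) != 0.
Proof. by move/pcharf0P: HK => ->; rewrite -lt0n fact_gt0. Qed.

Definition aa f k : fps T := fun n => (k`!%:R)^-1 *: iter k D f n.

Lemma D_scale k f : D (fps_scale k f) = fps_scale k (D f).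
Proof.
apply: functional_extensionality => n; rewrite /fps_der_act/fps_scale.
by rewrite scaler_sumr; apply: eq_bigr => i _; apply: (linZ (HXl _)).
Qed.

Lemma Daa f k : D (aa f k) = fun n => aa f k.+1 n *+ k.+1.
Proof.
rewrite /aa; have -> : (fun n => (k`!%:R)^-1 *: iter k D f n) =
   fps_scale (k`!%:R)^-1 (iter k D f) by [].
rewrite D_scale; apply: functional_extensionality => n.
rewrite /fps_scale -scaler_nat scalerA iterS; congr (_ *: _).
rewrite factS natrM invfM mulrA divff ?mul1r //; exact: natS_neq0.
Qed.

Lemma mul_mulnl (u v : fps T) p :
  fps_mul (fun n => u n *+ p) v = fun n => fps_mul u v n *+ p.
Proof.
apply: functional_extensionality => n; rewrite /fps_mul -sumrMnl.
by apply: eq_bigr => i _; rewrite mulrnAl.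
Qed.

Lemma mul_mulnr (u v : fps T) p :
  fps_mul u (fun n => v n *+ p) = fun n => fps_mul u v n *+ p.
Proof.
apply: functional_extensionality => n; rewrite /fps_mul -sumrMnl.
by apply: eq_bigr => i _; rewrite mulrnAr.
Qed.

Lemma shift_sum (V : nmodType) (w : nat -> V) m :
  \sum_(k < m.+1) w k.+1 *+ k.+1 = \sum_(k < m.+2) w k *+ k.
Proof. by rewrite [RHS]big_ord_recl /= mulr0n add0r. Qed.

Definition cc f g m : fps T :=
  fun n => \sum_(k < m.+1) fps_mul (aa f k) (aa g (m - k)) n.

Lemma Dcc f g m : D (cc f g m) = fun n => cc f g m.+1 n *+ m.+1.
Proof.
rewrite /cc D_sum //; apply: functional_extensionality => n.
under eq_bigr do rewrite D_leib // !Daa mul_mulnl mul_mulnr /fps_add.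
rewrite big_split /=.
rewrite (eq_bigr (fun k : 'I_m.+1 =>
   (fun k => fps_mul (aa f k) (aa g (m.+1 - k)) n *+ k) k.+1)); last first.
  by move=> k _ /=; rewrite subSS.
rewrite (shift_sum (fun k => fps_mul (aa f k) (aa g (m.+1 - k)) n)).
rewrite (eq_bigr (fun k : 'I_m.+1 =>
   (fun k => fps_mul (aa f k) (aa g (m.+1 - k)) n *+ (m.+1 - k)) k)); last first.
  by move=> k _; have Hk := ltn_ord k; rewrite subSn.
rewrite (@sum_ext _ (fun k => fps_mul (aa f k) (aa g (m.+1 - k)) n *+ (m.+1 - k)) m.+1 m.+2) //; last first.
  by move=> j Hj1 Hj2; have -> : (m.+1 - j = 0)%N by lia.
rewrite -big_split /=.
rewrite -sumrMnl; apply: eq_bigr => k _.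
have Hk := ltn_ord k; rewrite -mulrnDr; congr (_ *+ _); lia.
Qed.

Lemma aa0 f : aa f 0%N = f.
Proof.
by apply: functional_extensionality => n; rewrite /aa /= invr1 scale1r.
Qed.

Lemma mulnI (x y : T) p : x *+ p.+1 = y *+ p.+1 -> x = y.
Proof.
rewrite -!scaler_nat => /(congr1 (fun z => (p.+1%:R)^-1 *: z)).
by rewrite !scalerA mulVf ?scale1r //; exact: natS_neq0.
Qed.

Lemma aa_mul f g m : aa (fps_mul f g) m = cc f g m.
Proof.
elim: m => [|m IH].
  rewrite aa0 /cc; apply: functional_extensionality => n.
  by rewrite big_ord1 /= !aa0.
apply: functional_extensionality => n; apply: (@mulnI _ _ m).
have := Daa (fps_mul f g) m; rewrite IH Dcc => /(congr1 (fun h => h n)) /=.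
by move=> ->.
Qed.

Lemma aa_van f k n : (n < k)%N -> aa f k n = 0.
Proof. by move=> H; rewrite /aa iterD_van ?scaler0. Qed.

Lemma E_mul f g : fps_exp X (fps_mul f g) = fps_mul (fps_exp X f) (fps_exp X g).
Proof.
apply: functional_extensionality => n.
rewrite /fps_exp.
have -> : \sum_(m < n.+1) (m`!%:R)^-1 *: iter m D (fps_mul f g) n =
          \sum_(m < n.+1) aa (fps_mul f g) m n by [].
under eq_bigr do rewrite aa_mul.
rewrite /cc (tri_diag (fun k l => fps_mul (aa f k) (aa g l) n)).
rewrite /fps_mul.
transitivity (\sum_(k < n.+1) \sum_(l < n.+1) \sum_(i < n.+1) aa f k i * aa g l (n - i)%N).
  apply: eq_bigr => k _; rewrite (@sum_ext _ (fun l => \sum_(i < n.+1) aa f k i * aa g l (n - i)%N) (n - k).+1 n.+1); first by [].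
    by rewrite ltnS leq_subr.
  move=> l Hl1 Hl2; apply: big1 => i _; have Hi := ltn_ord i.
  case: (ltnP i k) => Hik; first by rewrite aa_van ?mul0r.
  by rewrite (@aa_van g) ?mulr0 //; lia.
symmetry.
transitivity (\sum_(i < n.+1) \sum_(k < n.+1) \sum_(l < n.+1) aa f k i * aa g l (n - i)%N).
  apply: eq_bigr => i _; have Hi := ltn_ord i.
  have -> : \sum_(m < i.+1) (m`!%:R)^-1 *: iter m D f i = \sum_(m < i.+1) aa f m i by [].
  have -> : \sum_(m < (n - i).+1) (m`!%:R)^-1 *: iter m D g (n - i)%N =
            \sum_(m < (n - i).+1) aa g m (n - i)%N by [].
  rewrite (@sum_ext _ (fun m => aa f m i) i.+1 n.+1) //; last first.
    by move=> j Hj _; rewrite aa_van.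
  rewrite (@sum_ext _ (fun m => aa g m (n - i)%N) (n - i).+1 n.+1); last first.
    by move=> j Hj _; rewrite aa_van.
    by rewrite ltnS leq_subr.
  rewrite mulr_suml; apply: eq_bigr => k _; by rewrite mulr_sumr.
rewrite exchange_big /=; apply: eq_bigr => k _.
by rewrite exchange_big.
Qed.

Lemma E_lin k f g : fps_exp X (fps_add (fps_scale k f) g) =
  fps_add (fps_scale k (fps_exp X f)) (fps_exp X g).
Proof.
apply: functional_extensionality => n; rewrite /fps_exp.
under eq_bigr do rewrite (iterD_lin HXl).
rewrite /fps_add/fps_scale scaler_sumr -big_split; apply: eq_bigr => m _ /=.
by rewrite scalerDr !scalerA mulrC.
Qed.

Lemma E_0 f : fps_exp X f 0%N = f 0.
Proof. by rewrite /fps_exp big_ord1 /= invr1 scale1r. Qed.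

Lemma E_sh f : fps_exp X (sh f) = sh (fps_exp X f).
Proof.
apply: functional_extensionality => -[|n]; first by rewrite E_0.
rewrite /fps_exp /=.
under eq_bigr do rewrite (iterD_sh HX0 HXl).
rewrite big_ord_recr /=.
by rewrite -iterS iterD_van ?scaler0 ?addr0.
Qed.

Lemma iter_zero m : iter m D (fun _ => 0) = fun _ => 0.
Proof. by elim: m => [|m IH] //=; rewrite IH D_zero. Qed.

Lemma E_one : fps_exp X (fps_one T) = fps_one T.
Proof.
apply: functional_extensionality => n; rewrite /fps_exp big_ord_recl /= invr1 scale1r.
rewrite big1 ?addr0 // => i _.
have -> : iter (0 + i) D (fps_one T) = iter i D (fps_one T) by [].
rewrite -iterS iterSr D_one // iter_zero.
by rewrite scaler0.
Qed.

End Exp.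

Section Local.
Variable K : fieldType.
Variable T : comAlgType K.
Variables X X' : nat -> T -> T.

Lemma iterD_local p : (forall i, (i <= p)%N -> X' i = X i) ->
  forall m f k, (k <= p)%N -> iter m (fps_der_act X') f k = iter m (fps_der_act X) f k.
Proof.
move=> H; elim=> [|m IH] f k Hk //=.
rewrite /fps_der_act; apply: eq_bigr => i _; have Hi := ltn_ord i.
by rewrite H ?IH //; lia.
Qed.

Lemma E_local p : (forall i, (i <= p)%N -> X' i = X i) ->
  forall f k, (k <= p)%N -> fps_exp X' f k = fps_exp X f k.
Proof.
move=> H f k Hk; rewrite /fps_exp; apply: eq_bigr => m _.
by rewrite (iterD_local H).
Qed.

Hypothesis HX0 : X 0%N =1 (fun _ => 0).
Hypothesis HXl : forall j, is_klinear (X j).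
Variable Y : T -> T.
Hypothesis HYl : is_klinear Y.
Variable n : nat.
Hypothesis HX'1 : forall i, i != n.+1 -> X' i = X i.
Hypothesis HX'2 : forall b, X' n.+1 b = X n.+1 b + Y b.

Lemma agree_n : forall i, (i <= n)%N -> X' i = X i.
Proof. by move=> i Hi; apply: HX'1; rewrite neq_ltn ltnS Hi. Qed.

Lemma iterD_bump m f : iter m (fps_der_act X') f n.+1 =
  iter m (fps_der_act X) f n.+1 + (if m == 1%N then Y (f 0%N) else 0).
Proof.
case: m => [|m] /=; first by rewrite addr0.
rewrite /fps_der_act big_ord_recr [in RHS]big_ord_recr /= subnn HX'2.
rewrite (iterD_local agree_n) //.
have -> : \sum_(i < n.+1) X' i (iter m (fps_der_act X') f (n.+1 - i)%N) =
          \sum_(i < n.+1) X i (iter m (fps_der_act X) f (n.+1 - i)%N).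
  apply: eq_bigr => i _; have Hi := ltn_ord i.
  rewrite agree_n; last by lia.
  case: (posnP i) => [->|Hi0]; first by rewrite !HX0.
  by rewrite (iterD_local agree_n) //; lia.
rewrite addrA; congr (_ + _).
case: m => [|m]; first by [].
by rewrite iterD_0 // (lin0 HYl).
Qed.

Lemma E_bump f : fps_exp X' f n.+1 = fps_exp X f n.+1 + Y (f 0%N).
Proof.
rewrite /fps_exp.
under eq_bigr do rewrite iterD_bump scalerDr.
rewrite big_split /=; congr (_ + _).
rewrite big_ord_recl /= scaler0 add0r big_ord_recl /= invr1 scale1r.
by rewrite big1 ?addr0 // => i _; rewrite scaler0.
Qed.

End Local.

Lemma decomp (K : fieldType) (T : comAlgType K) (f : fps T) : f = fps_add (cst (f 0%N)) (sh (tl f)).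
Proof.
apply: functional_extensionality => -[|n]; rewrite /fps_add/cst/sh/tl /=.
  by rewrite addr0.
by rewrite add0r.
Qed.

Section BE.
Variable K : fieldType.
Variables (T U : comAlgType K) (F : fps T -> fps T -> fps U).
Hypothesis Faddl : forall f1 f2 g, F (fps_add f1 f2) g = fun m => F f1 g m + F f2 g m.
Hypothesis Faddr : forall f g1 g2, F f (fps_add g1 g2) = fun m => F f g1 m + F f g2 m.
Hypothesis Fshl : forall f g, F (sh f) g = sh (F f g).
Hypothesis Fshr : forall f g, F f (sh g) = sh (F f g).

Lemma BE_dec f g m : F f g m.+1 =
  F (cst (f 0%N)) (cst (g 0%N)) m.+1 + F (cst (f 0%N)) (tl g) m + F (tl f) g m.
Proof.
have -> : F f g m.+1 = F (fps_add (cst (f 0%N)) (sh (tl f))) g m.+1 by rewrite -decomp.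
rewrite Faddl Fshl /=.
have -> : F (cst (f 0%N)) g m.+1 = F (cst (f 0%N)) (fps_add (cst (g 0%N)) (sh (tl g))) m.+1
  by rewrite -decomp.
by rewrite Faddr Fshr.
Qed.

Lemma BE_dec0 f g : F f g 0%N = F (cst (f 0%N)) (cst (g 0%N)) 0%N.
Proof.
have -> : F f g 0 = F (fps_add (cst (f 0%N)) (sh (tl f))) g 0 by rewrite -decomp.
rewrite Faddl Fshl /= addr0.
have -> : F (cst (f 0%N)) g 0 = F (cst (f 0%N)) (fps_add (cst (g 0%N)) (sh (tl g))) 0
  by rewrite -decomp.
by rewrite Faddr Fshr /= addr0.
Qed.

Variable n : nat.
Hypothesis Hc : forall a b m, (m <= n)%N -> F (cst a) (cst b) m = 0.

Lemma BE1 : forall m f g, (m <= n)%N -> F f g m = 0.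
Proof.
elim=> [|m IH] f g Hm; first by rewrite BE_dec0 Hc.
by rewrite BE_dec Hc // !IH ?addr0 //; apply: ltnW.
Qed.

Lemma BE2 f g : F f g n.+1 = F (cst (f 0%N)) (cst (g 0%N)) n.+1.
Proof. by rewrite BE_dec [F _ (tl g) n]BE1 // [F (tl f) g n]BE1 // !addr0. Qed.

End BE.

Section Main.
Variable K : fieldType.
Hypothesis HK : [pchar K] =i pred0.
Variables (A B : comAlgType K) (pi0 : A -> A -> A) (sigma0 : B -> B -> B) (phi0 : A -> B).
Hypothesis Hpi0 : is_poisson_bracket pi0.
Hypothesis Hsig0 : is_poisson_bracket sigma0.
Hypothesis Hphi : is_poisson_morphism pi0 sigma0 phi0.
Variables (pi : nat -> A -> A -> A) (sigma : nat -> B -> B -> B).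
Hypothesis Hpi : is_formal_poisson_deformation pi0 pi.
Hypothesis Hsig : is_formal_poisson_deformation sigma0 sigma.

Let phil : is_klinear phi0. Proof. by case: Hphi => -[]. Qed.
Let phiM a b : phi0 (a * b) = phi0 a * phi0 b. Proof. by case: Hphi => -[]. Qed.
Let phi1 : phi0 1 = 1. Proof. by case: Hphi => -[]. Qed.
Let phiP a b : phi0 (pi0 a b) = sigma0 (phi0 a) (phi0 b). Proof. by case: Hphi. Qed.
Let pibil : forall j, is_kbilinear (pi j). Proof. by case: Hpi. Qed.
Let sigbil : forall j, is_kbilinear (sigma j). Proof. by case: Hsig. Qed.
Let pi_0 : pi 0%N = pi0. Proof. by case: Hpi. Qed.
Let sig_0 : sigma 0%N = sigma0. Proof. by case: Hsig. Qed.

Definition good (X : nat -> B -> B) := X 0%N =1 (fun _ => 0) /\ forall j, is_derivation (X j).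

Definition Phi (X : nat -> B -> B) (f : fps A) : fps B := fps_exp X (fps_map phi0 f).

Lemma map_lin k f g : fps_map phi0 (fps_add (fps_scale k f) g) =
  fps_add (fps_scale k (fps_map phi0 f)) (fps_map phi0 g).
Proof. by apply: functional_extensionality => n; rewrite /fps_map/fps_add/fps_scale phil. Qed.

Lemma map_sh f : fps_map phi0 (sh f) = sh (fps_map phi0 f).
Proof. by apply: functional_extensionality => -[|n] //=; rewrite /fps_map /= (lin0 phil). Qed.

Lemma map_mul f g : fps_map phi0 (fps_mul f g) = fps_mul (fps_map phi0 f) (fps_map phi0 g).
Proof.
apply: functional_extensionality => n; rewrite /fps_map/fps_mul (lin_sum phil).
by apply: eq_bigr => i _; rewrite phiM.
Qed.

Lemma map_one : fps_map phi0 (fps_one A) = fps_one B.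
Proof.
apply: functional_extensionality => n; rewrite /fps_map/fps_one.
by case: ifP => _; rewrite ?phi1 ?(lin0 phil).
Qed.

Lemma map_cst a : fps_map phi0 (cst a) = cst (phi0 a).
Proof.
apply: functional_extensionality => n; rewrite /fps_map/cst.
by case: ifP => _; rewrite ?(lin0 phil).
Qed.

Section WithX.
Variable X : nat -> B -> B.
Hypothesis HX : good X.
Let HX0 : X 0%N =1 (fun _ => 0). Proof. by case: HX. Qed.
Let HXd : forall j, is_derivation (X j). Proof. by case: HX. Qed.
Let HXl : forall j, is_klinear (X j). Proof. by move=> j; case: (HXd j). Qed.

Lemma Phi_lin k f g : Phi X (fps_add (fps_scale k f) g) =
  fps_add (fps_scale k (Phi X f)) (Phi X g).
Proof. by rewrite /Phi map_lin E_lin. Qed.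

Lemma Phi_add f g : Phi X (fps_add f g) = fps_add (Phi X f) (Phi X g).
Proof.
have E1 : forall (T : comAlgType K) (h : fps T), fps_scale 1 h = h.
  by move=> T h; apply: functional_extensionality => n; rewrite /fps_scale scale1r.
by rewrite -{1}(E1 _ f) Phi_lin E1.
Qed.

Lemma Phi_zero : Phi X (fun _ => 0) = fun _ => 0.
Proof.
have := Phi_lin (-1) (fun _ => 0) (fun _ => 0).
have -> : fps_add (fps_scale (-1) (fun _ : nat => 0 : A)) (fun _ => 0) = fun _ => 0.
  by apply: functional_extensionality => n; rewrite /fps_add/fps_scale scaler0 addr0.
move=> E; apply: functional_extensionality => n.
have := congr1 (fun h => h n) E; rewrite /fps_add/fps_scale scaleN1r addNr.
by [].
Qed.

Lemma Phi_neg h : Phi X (fun n => - h n) = fun n => - Phi X h n.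
Proof.
have := Phi_lin (-1) h (fun _ => 0).
have -> : fps_add (fps_scale (-1) h) (fun _ => 0) = fun n => - h n.
  by apply: functional_extensionality => n; rewrite /fps_add/fps_scale scaleN1r addr0.
move=> ->; rewrite Phi_zero; apply: functional_extensionality => n.
by rewrite /fps_add/fps_scale scaleN1r addr0.
Qed.

Lemma Phi_sh f : Phi X (sh f) = sh (Phi X f).
Proof. by rewrite /Phi map_sh E_sh. Qed.

Lemma Phi_mul f g : Phi X (fps_mul f g) = fps_mul (Phi X f) (Phi X g).
Proof. by rewrite /Phi map_mul E_mul. Qed.

Lemma Phi_one : Phi X (fps_one A) = fps_one B.
Proof. by rewrite /Phi map_one E_one. Qed.

Lemma Phi_0 f : Phi X f 0%N = phi0 (f 0%N).
Proof. by rewrite /Phi E_0. Qed.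

Definition Delta f g : fps B :=
  fun m => Phi X (fps_br pi f g) m - fps_br sigma (Phi X f) (Phi X g) m.

Lemma Delta_linl k f1 f2 g : Delta (fps_add (fps_scale k f1) f2) g =
  fps_add (fps_scale k (Delta f1 g)) (Delta f2 g).
Proof.
rewrite /Delta br_linl // Phi_lin Phi_lin br_linl //.
apply: functional_extensionality => m; rewrite /fps_add/fps_scale.
by rewrite scalerBr opprD addrACA.
Qed.

Lemma Delta_linr k f g1 g2 : Delta f (fps_add (fps_scale k g1) g2) =
  fps_add (fps_scale k (Delta f g1)) (Delta f g2).
Proof.
rewrite /Delta br_linr // Phi_lin Phi_lin br_linr //.
apply: functional_extensionality => m; rewrite /fps_add/fps_scale.
by rewrite scalerBr opprD addrACA.
Qed.

Lemma scale1f (T : comAlgType K) (h : fps T) : fps_scale 1 h = h.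
Proof. by apply: functional_extensionality => n; rewrite /fps_scale scale1r. Qed.

Lemma Delta_addl f1 f2 g : Delta (fps_add f1 f2) g = fun m => Delta f1 g m + Delta f2 g m.
Proof. by rewrite -{1}(scale1f f1) Delta_linl scale1f. Qed.

Lemma Delta_addr f g1 g2 : Delta f (fps_add g1 g2) = fun m => Delta f g1 m + Delta f g2 m.
Proof. by rewrite -{1}(scale1f g1) Delta_linr scale1f. Qed.

Lemma Delta_shl f g : Delta (sh f) g = sh (Delta f g).
Proof.
rewrite /Delta br_shl // Phi_sh Phi_sh br_shl //.
by apply: functional_extensionality => -[|m] //=; rewrite subrr.
Qed.

Lemma Delta_shr f g : Delta f (sh g) = sh (Delta f g).
Proof.
rewrite /Delta br_shr // Phi_sh Phi_sh br_shr //.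
by apply: functional_extensionality => -[|m] //=; rewrite subrr.
Qed.

Definition ok n := forall a b m, (m <= n)%N -> Delta (cst a) (cst b) m = 0.

Lemma ok_all n : ok n -> forall f g m, (m <= n)%N -> Delta f g m = 0.
Proof.
move=> H f g m Hm; exact: (BE1 Delta_addl Delta_addr Delta_shl Delta_shr H f g Hm).
Qed.

Lemma ok_next n : ok n -> forall f g, Delta f g n.+1 = Delta (cst (f 0%N)) (cst (g 0%N)) n.+1.
Proof. by move=> H f g; apply: (BE2 Delta_addl Delta_addr Delta_shl Delta_shr H). Qed.

Lemma ok0 : ok 0.
Proof.
move=> a b m; rewrite leqn0 => /eqP ->.
by rewrite /Delta Phi_0 !br_0 !Phi_0 /cst /= pi_0 sig_0 phiP subrr.
Qed.


Lemma mul_subl (u u' w : fps B) m :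
  fps_mul (fun i => u i - u' i) w m = fps_mul u w m - fps_mul u' w m.
Proof. by rewrite /fps_mul -sumrB; apply: eq_bigr => i _; rewrite mulrBl. Qed.

Lemma mul_subr (u w w' : fps B) m :
  fps_mul u (fun i => w i - w' i) m = fps_mul u w m - fps_mul u w' m.
Proof. by rewrite /fps_mul -sumrB; apply: eq_bigr => i _; rewrite mulrBr. Qed.

Lemma Delta_antisym f g : Delta f g = fun m => - Delta g f m.
Proof.
have E1 : fps_br pi f g = fun m => - fps_br pi g f m.
  by apply: functional_extensionality => m; case: Hpi => _ _ H _ _; rewrite H.
have E2 : fps_br sigma (Phi X f) (Phi X g) = fun m => - fps_br sigma (Phi X g) (Phi X f) m.
  by apply: functional_extensionality => m; case: Hsig => _ _ H _ _; rewrite H.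
rewrite /Delta E1 E2 Phi_neg; apply: functional_extensionality => m.
by rewrite opprK opprB addrC.
Qed.

Lemma Delta_der f g h : Delta f (fps_mul g h) =
  fun m => fps_mul (Delta f g) (Phi X h) m + fps_mul (Phi X g) (Delta f h) m.
Proof.
have E1 : fps_br pi f (fps_mul g h) =
   fps_add (fps_mul (fps_br pi f g) h) (fps_mul g (fps_br pi f h)).
  by apply: functional_extensionality => m; case: Hpi => _ _ _ H _; rewrite H.
have E2 : fps_br sigma (Phi X f) (fps_mul (Phi X g) (Phi X h)) =
   fps_add (fps_mul (fps_br sigma (Phi X f) (Phi X g)) (Phi X h))
           (fps_mul (Phi X g) (fps_br sigma (Phi X f) (Phi X h))).
  by apply: functional_extensionality => m; case: Hsig => _ _ _ H _; rewrite H.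
rewrite /Delta E1 Phi_add !Phi_mul E2; apply: functional_extensionality => m.
by rewrite mul_subl mul_subr /fps_add opprD addrACA.
Qed.

Lemma key3 f g h m : Phi X (fps_br pi f (fps_br pi g h)) m =
  Delta f (fps_br pi g h) m + fps_br sigma (Phi X f) (Delta g h) m +
  fps_br sigma (Phi X f) (fps_br sigma (Phi X g) (Phi X h)) m.
Proof.
have E1 : Phi X (fps_br pi g h) = fps_add (Delta g h) (fps_br sigma (Phi X g) (Phi X h)).
  by apply: functional_extensionality => j; rewrite /fps_add /Delta subrK.
rewrite -addrA -[fps_br sigma (Phi X f) (Delta g h) m + _]/(fps_add _ _ m).
rewrite -{1}(scale1f (fps_br sigma (Phi X f) (Delta g h))) -br_linr // scale1f -E1.
by rewrite /Delta subrK.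
Qed.

Section Stepn.
Variable n : nat.
Hypothesis Hok : ok n.

Definition R a b := Delta (cst a) (cst b) n.+1.

Lemma cst_lin (T : comAlgType K) k (a b : T) :
  cst (k *: a + b) = fps_add (fps_scale k (cst a)) (cst b).
Proof.
apply: functional_extensionality => m; rewrite /fps_add/fps_scale/cst.
by case: ifP => _; rewrite ?scaler0 ?addr0.
Qed.

Lemma R_linl c : is_klinear (fun a => R a c).
Proof. by move=> k a b; rewrite /R cst_lin Delta_linl. Qed.

Lemma R_linr a : is_klinear (R a).
Proof. by move=> k b c; rewrite /R cst_lin Delta_linr. Qed.

Lemma R_anti a b : R a b = - R b a.
Proof. by rewrite /R Delta_antisym. Qed.

Lemma Delta_low a b j : (j <= n)%N -> Delta (cst a) (cst b) j = 0.
Proof. exact: Hok. Qed.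

Lemma R_der2 a : is_der_along phi0 (R a).
Proof.
split; first exact: R_linr.
move=> b c; rewrite /R -mul_cst Delta_der.
rewrite (mul_high_l _ (Delta_low a b)) (mul_high_r _ (Delta_low a c)).
by rewrite !Phi_0 /cst /= addrC.
Qed.

Lemma R_der1 b : is_der_along phi0 (fun a => R a b).
Proof.
split; first exact: R_linl.
move=> a c; rewrite R_anti (proj2 (R_der2 b)) opprD -mulrN -mulNr -!R_anti.
by [].
Qed.

Lemma R_C2der : C2der phi0 R.
Proof.
split; [split|exact: R_anti|exact: R_der1|exact: R_der2].
  exact: R_linl.
exact: R_linr.
Qed.

Lemma R_cyc a b c :
  (R a (pi0 b c) + sigma0 (phi0 a) (R b c)) +
  (R b (pi0 c a) + sigma0 (phi0 b) (R c a)) +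
  (R c (pi0 a b) + sigma0 (phi0 c) (R a b)) = 0.
Proof.
have J1 := congr1 (fun h => Phi X h n.+1) (functional_extensionality _ _
   ((fun H => H (cst a) (cst b) (cst c)) (let: And5 _ _ _ _ J := Hpi in J))).
have J2 := (let: And5 _ _ _ _ J := Hsig in J) (Phi X (cst a)) (Phi X (cst b)) (Phi X (cst c)) n.+1.
move: J1 => /=; rewrite Phi_zero !Phi_add /fps_add !key3.
have T1 : forall x y z, Delta (cst x) (fps_br pi (cst y) (cst z)) n.+1 = R x (pi0 y z).
  move=> x y z; rewrite (ok_next Hok) /R br_cst //= pi_0.
  by [].
have T2 : forall x y z, fps_br sigma (Phi X (cst x)) (Delta (cst y) (cst z)) n.+1 =
                        sigma0 (phi0 x) (R y z).
  by move=> x y z; rewrite (br_high_r _ _ (Delta_low y z)) // Phi_0 sig_0.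
rewrite !T1 !T2 => H; rewrite -H.
move: J2; rewrite /fps_add => J2.
apply/eqP; rewrite eq_sym -subr_eq0; apply/eqP; rewrite -[X in _ = X]J2.
ring.
Qed.

Lemma R_cocycle a b c : delta2 pi0 sigma0 phi0 R a b c = 0.
Proof.
have [[_ sbil] _ _ _] := Hsig0.
have [_ panti _ _] := Hpi0.
rewrite /delta2 (R_anti a c) (R_anti (pi0 a b) c) (R_anti (pi0 a c) b) (R_anti (pi0 b c) a).
rewrite (panti a c) (linN (R_linr b)) (linN (sbil _)).
rewrite -(R_cyc a b c); ring.
Qed.

End Stepn.

End WithX.

Definition upd (X : nat -> B -> B) k (Y : B -> B) : nat -> B -> B :=
  fun j => if j == k then (fun b => X j b + Y b) else X j.

Lemma der_add (Y1 Y2 : B -> B) : is_derivation Y1 -> is_derivation Y2 ->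
  is_derivation (fun b => Y1 b + Y2 b).
Proof.
move=> [H1l H1d] [H2l H2d]; split.
  by move=> k x y; rewrite H1l H2l scalerDr addrACA.
by move=> x y; rewrite H1d H2d mulrDr mulrDl addrACA.
Qed.

Lemma Delta_local (X X' : nat -> B -> B) p : (forall i, (i <= p)%N -> X' i = X i) ->
  forall f g m, (m <= p)%N -> Delta X' f g m = Delta X f g m.
Proof.
move=> H f g m Hm; rewrite /Delta /Phi (E_local H) //.
congr (_ - _); apply: br_local => j Hj; apply: (E_local H); exact: leq_trans Hj Hm.
Qed.

Hypothesis Hlift : has_horizontal_lift phi0.
Hypothesis HH2 : H2der_trivial pi0 sigma0 phi0.

Lemma step (X : nat -> B -> B) n : good X -> ok X n ->
  exists Y, is_derivation Y /\ good (upd X n.+1 Y) /\ ok (upd X n.+1 Y) n.+1.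
Proof.
move=> HX Hok.
have [E [HE HRE]] := HH2 (R_C2der HX Hok) (R_cocycle HX Hok).
have [h Hh] := Hlift.
have [HYd _ HYphi] := Hh E HE.
set Y := h E in HYd HYphi.
have HYl : is_klinear Y by case: HYd.
have [HX0 HXd] := HX.
have HX'1 : forall i, i != n.+1 -> upd X n.+1 Y i = X i.
  by move=> i Hi; rewrite /upd (negbTE Hi).
have HX'2 : forall b, upd X n.+1 Y n.+1 b = X n.+1 b + Y b.
  by move=> b; rewrite /upd eqxx.
have HXl : forall j, is_klinear (X j) by move=> j; case: (HXd j).
have Hagree : forall i, (i <= n)%N -> upd X n.+1 Y i = X i.
  by move=> i Hi; apply: HX'1; rewrite neq_ltn ltnS Hi.
have HG : good (upd X n.+1 Y).
  split; first by move=> b; rewrite /upd /= HX0.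
  move=> j; rewrite /upd; case: ifP => _; last exact: HXd.
  exact: der_add.
exists Y; split => //; split => //.
move=> a b m; rewrite leq_eqVlt => /orP [/eqP ->|Hm]; last first.
  by rewrite (Delta_local Hagree) //; apply: Hok.
have PhiB : forall f, Phi (upd X n.+1 Y) f n.+1 = Phi X f n.+1 + Y (phi0 (f 0%N)).
  by move=> f; rewrite /Phi (E_bump HX0 HYl HX'1 HX'2).
pose dl (u : B) : fps B := fun j => if j == n.+1 then u else 0.
have PhiC : forall x j, (j <= n.+1)%N ->
    Phi (upd X n.+1 Y) (cst x) j = fps_add (Phi X (cst x)) (dl (Y (phi0 x))) j.
  move=> x j; rewrite leq_eqVlt => /orP [/eqP ->|Hj].
    by rewrite PhiB /fps_add /dl eqxx.
  rewrite /Phi (E_local Hagree) // /fps_add /dl.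
  have -> : (j == n.+1) = false by apply/negbTE; rewrite neq_ltn Hj.
  by rewrite addr0.
have dl_low : forall u j, (j <= n)%N -> dl u j = 0.
  by move=> u j Hj; rewrite /dl; have -> : (j == n.+1) = false by apply/negbTE; rewrite neq_ltn ltnS Hj.
rewrite /Delta PhiB (br_local sigma (PhiC a) (PhiC b)).
rewrite -{1}(scale1f (Phi X (cst a))) br_linl // scale1f.
rewrite -{1}(scale1f (Phi X (cst b))) !br_linr // !scale1f /fps_add.
rewrite (br_high_r _ _ (dl_low _)) // (br_high_l _ _ (dl_low _)) // /dl /= eqxx addr0.
have -> : Phi X (fps_br pi (cst a) (cst b)) n.+1 =
   R X n a b + fps_br sigma (Phi X (cst a)) (Phi X (cst b)) n.+1.
  by rewrite /R /Delta subrK.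
rewrite !Phi_0 br_0 /cst /= pi_0 sig_0 !HYphi.
rewrite HRE /delta1.
have [_ santi _ _] := Hsig0.
rewrite (santi (E a)).
ring.
Qed.

End Main.

End Aux.
Import Aux.

Theorem proposition3p6 (K : fieldType) (A B : comAlgType K)
    (pi0 : A -> A -> A) (sigma0 : B -> B -> B) (phi0 : A -> B) :
  [pchar K] =i pred0 ->
  is_poisson_bracket pi0 ->
  is_poisson_bracket sigma0 ->
  is_poisson_morphism pi0 sigma0 phi0 ->
  has_horizontal_lift phi0 ->
  H2der_trivial pi0 sigma0 phi0 ->
  forall (pi : nat -> A -> A -> A) (sigma : nat -> B -> B -> B),
    is_formal_poisson_deformation pi0 pi ->
    is_formal_poisson_deformation sigma0 sigma ->
    exists X : nat -> B -> B,
      is_lambda_der_series X /\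
      is_fps_poisson_morphism pi sigma (fun f => fps_exp X (fps_map phi0 f)).
Proof.
move=> HK Hpi0 Hsig0 Hphi Hlift HH2 pi sigma Hpi Hsig.
have stepP : forall (X : nat -> B -> B) n, exists Y : B -> B,
    good X /\ ok phi0 pi sigma X n ->
    is_derivation Y /\ good (upd X n.+1 Y) /\ ok phi0 pi sigma (upd X n.+1 Y) n.+1.
  move=> X n; case: (classic (good X /\ ok phi0 pi sigma X n)) => [[HX Hok]|Hn].
    have [Y HY] := step HK Hpi0 Hsig0 Hphi Hpi Hsig Hlift HH2 HX Hok.
    by exists Y.
  by exists (fun _ => 0) => H; case: (Hn H).
pose F X n := proj1_sig (constructive_indefinite_description _ (stepP X n)).
have HF : forall X n, good X /\ ok phi0 pi sigma X n ->
    is_derivation (F X n) /\ good (upd X n.+1 (F X n)) /\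
    ok phi0 pi sigma (upd X n.+1 (F X n)) n.+1.
  by move=> X n; exact: (proj2_sig (constructive_indefinite_description _ (stepP X n))).
pose Xs := fix Xs (n : nat) : nat -> B -> B :=
  match n with 0 => fun _ _ => 0 | n'.+1 => upd (Xs n') n'.+1 (F (Xs n') n') end.
have Hinv : forall n, good (Xs n) /\ ok phi0 pi sigma (Xs n) n.
  elim=> [|n [HG Hok]].
    split; last exact: (ok0 Hphi Hpi Hsig).
    split; first by [].
    move=> j; split.
      by move=> k x y; rewrite scaler0 addr0.
    by move=> x y; rewrite mulr0 mul0r addr0.
  by have [_ [HG' Hok']] := HF (Xs n) n (conj HG Hok).
pose X j := Xs j j.
have Hagree : forall n j, (j <= n)%N -> Xs n j = X j.
  elim=> [|n IH] j.
    by rewrite leqn0 => /eqP ->.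
  rewrite leq_eqVlt => /orP [/eqP ->|Hj] //.
  have Hne : (j == n.+1) = false by apply/negbTE; rewrite neq_ltn Hj.
  by rewrite /= /upd Hne IH.
have HX : good X.
  split; first by [].
  by move=> j; exact: (proj2 (proj1 (Hinv j)) j).
have Hok : forall n, ok phi0 pi sigma X n.
  move=> n a b m Hm.
  rewrite (Delta_local phi0 pi sigma (X := Xs n) (X' := X) (p := n)) //.
    exact: (proj2 (Hinv n)).
  by move=> i Hi; rewrite Hagree.
exists X; split; first exact: HX.
split.
- by move=> k f g n; have := Phi_lin Hphi HX k f g; rewrite /Phi => ->.
- by move=> f g n; have := Phi_mul HK Hphi HX f g; rewrite /Phi => ->.
- by move=> n; have := Phi_one Hphi HX; rewrite /Phi => ->.
- move=> f g m; have := ok_all Hphi Hpi Hsig HX (Hok m) f g (leqnn m).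
  by rewrite /Delta /Phi => /eqP; rewrite subr_eq0 => /eqP.
Qed.
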